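(* The semigroups of tight and loose roles are both functorial with respect to positional reductions. That is, they define functors \[\mathrm{Role}_{\mathrm{tight}} \colon k\mathbf{FHGraph}_\mathsf{PR} \to \mathbf{SGrp}_\mathsf{Q}\] and \[\mathrm{Role}_{\mathrm{loose}} \colon k\mathbf{FHGraph}_\mathsf{PR} \to \mathbf{SGrp}_\mathsf{Q}.\]
   Context: An F-hypergraph is a pair of sets \((A,H)\) with \(H \subseteq A \times \mathcal{P}(A)\); a hyperedge is written \((a,U)\) with source vertex \(a\) and target set \(U \subseteq A\). A \(k\)-relational F-hypergraph is \(\mathcal{H} = (A,(H_i)_{i=1}^k)\) where each \((A,H_i)\) is an F-hypergraph. A map of \(k\)-relational F-hypergraphs \((A,(H_i)_{i=1}^k) \to (A',(H_i')_{i=1}^k)\) is a function \(f\colon A \to A'\) such that for every \(i\) and every \((a,V) \in H_i\) we have \((f(a), f(V)) \in H_i'\). Such a map reflects hyperedges if for every \(i\), every vertex \(a \in A\) and every hyperedge \((f(a),U) \in H_i'\), there exists \(V \subseteq A\) with \((a,V) \in H_i\) and \(f(V) = U\). A positional reduction is a map of \(k\)-relational F-hypergraphs which is surjective on vertices and reflects hyperedges; \(k\mathbf{FHGraph}_\mathsf{PR}\) denotes the category of \(k\)-relational F-hypergraphs and positional reductions. \(\mathbf{SGrp}_\mathsf{Q}\) denotes the category of semigroups and surjective semigroup homomorphisms. For F-hypergraphs \((A,H_1)\), \((A,H_2)\) on the same set, the tight composite is the F-hypergraph on \(A\) with hyperedge set \[\{(a,U) \mid \text{there exist } (a,V) \in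 H_1 \text{ and } b \in V \text{ such that } (b,U) \in H_2\},\] and the loose composite \(H_2 \diamond H_1\) has hyperedge set \[\Big\{(a,W) \;\Big|\; \text{there exists } (a,V) \in H_1 \text{ such that } W = \bigcup_{b \in V} \bigcup_{(b,U) \in H_2} U\Big\}.\] Both operations are associative on the set of F-hypergraph structures on \(A\). For \(\mathcal{H} = (A,(H_i)_{i=1}^k)\), the semigroup of tight roles \(\mathrm{Role}_{\mathrm{tight}}(\mathcal{H})\) is the semigroup generated by \(H_1,\ldots,H_k\) under tight composition, and the semigroup of loose roles \(\mathrm{Role}_{\mathrm{loose}}(\mathcal{H})\) is the semigroup generated by \(H_1,\ldots,H_k\) under loose composition. (In the paper these are written with a black-diamond subscript and a \(\diamond\) subscript, respectively.) *)

(* Defs.v *)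
From mathcomp Require Import all_boot.
Set Implicit Arguments. Unset Strict Implicit. Unset Printing Implicit Defensive.

(* An F-hypergraph structure on A: a set of pairs (a, U) with U a subset of A. *)
Definition fhg (A : Type) := A -> (A -> Prop) -> Prop.

Definition img {A A' : Type} (f : A -> A') (V : A -> Prop) : A' -> Prop :=
  fun y => exists x, V x /\ f x = y.

Definition tight_comp {A : Type} (H1 H2 : fhg A) : fhg A :=
  fun a U => exists V, H1 a V /\ exists b, V b /\ H2 b U.

(* loose composite  H2 <> H1 , written here with H1 first *)
Definition loose_comp {A : Type} (H1 H2 : fhg A) : fhg A :=
  fun a W => exists V, H1 a V /\
    W = (fun x => exists b, V b /\ exists U, H2 b U /\ U x).

Inductive gen (op : forall A : Type, fhg A -> fhg A -> fhg A)
    {A : Type} {k : nat} (H : 'I_k -> fhg A) : fhg A -> Prop :=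
  | gen_base (i : 'I_k) : gen op H (H i)
  | gen_op (S T : fhg A) : gen op H S -> gen op H T -> gen op H (op A S T).

Definition is_PR {k : nat} {A A' : Type} (H : 'I_k -> fhg A) (H' : 'I_k -> fhg A')
    (f : A -> A') : Prop :=
  [/\ (forall y : A', exists x : A, f x = y),
      (forall i a V, H i a V -> H' i (f a) (img f V)) &
      (forall i a U, H' i (f a) U -> exists V, H i a V /\ img f V = U)].

(* Role_op is a functor kFHGraph_PR -> SGrp_Q: each positional reduction f
   gets a surjective semigroup homomorphism Role(H) -> Role(H') (acting on
   generated elements), sending generator H_i to H'_i, and the assignment
   preserves identities and composition. *)
Definition role_functor (op : forall A : Type, fhg A -> fhg A -> fhg A) (k : nat) : Prop :=
  exists Phi : forall (A A' : Type) (H : 'I_k -> fhg A) (H' : 'I_k -> fhg A')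
                 (f : A -> A'), is_PR H H' f -> fhg A -> fhg A',
  (forall A A' H H' f (p : @is_PR k A A' H H' f),
     [/\ (forall S, gen op H S -> gen op H' (Phi A A' H H' f p S)),
         (forall S T, gen op H S -> gen op H T ->
            Phi A A' H H' f p (op A S T) =
            op A' (Phi A A' H H' f p S) (Phi A A' H H' f p T)),
         (forall S', gen op H' S' -> exists S, gen op H S /\ Phi A A' H H' f p S = S') &
         (forall i, Phi A A' H H' f p (H i) = H' i)]) /\
  (forall A H (p : @is_PR k A A H H id) S, gen op H S -> Phi A A H H id p S = S) /\
  (forall A A' A'' H H' H'' f g
          (p : @is_PR k A A' H H' f) (q : @is_PR k A' A'' H' H'' g)
          (r : @is_PR k A A'' H H'' (fun x => g (f x))) S,
     gen op H S ->
     Phi A A'' H H'' (fun x => g (f x)) r S = Phi A' A'' H' H'' g q (Phi A A' H H' f p S)).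

(* Main.v *)
Require Import Defs.
From mathcomp Require Import all_boot.
From Stdlib Require Import FunctionalExtensionality PropExtensionality.

Definition push {A A' : Type} (f : A -> A') (S : fhg A) : fhg A' :=
  fun y U => exists a V, S a V /\ f a = y /\ img f V = U.

Definition Rf {A A' : Type} (f : A -> A') (S : fhg A) : Prop :=
  forall a U, push f S (f a) U -> exists V, S a V /\ img f V = U.

Lemma fhg_ext {A : Type} (S T : fhg A) : (forall a U, S a U <-> T a U) -> S = T.
Proof.
move=> h; apply: functional_extensionality => a;
apply: functional_extensionality => U; apply: propositional_extensionality; exact: h.
Qed.

Lemma set_ext {A : Type} (S T : A -> Prop) : (forall a, S a <-> T a) -> S = T.
Proof.
move=> h; apply: functional_extensionality => a; apply: propositional_extensionality; exact: h.
Qed.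

Lemma functor_of (op : forall A : Type, fhg A -> fhg A -> fhg A)
  (Hop : forall A A' (f : A -> A') S T, Rf f S -> Rf f T ->
      Rf f (op A S T) /\ push f (op A S T) = op A' (push f S) (push f T)) k :
  role_functor op k.
Proof.
exists (fun A A' H H' f _ => push f).
split; [|split].
- move=> A A' H H' f [fs ff fr].
  have base : forall i, push f (H i) = H' i.
    move=> i; apply: fhg_ext => y U; split.
    + by case=> [a [V [hV [<- <-]]]]; apply: ff.
    + move=> h; case: (fs y) => a ea; subst y.
      case: (fr _ _ _ h) => V [hV eV]; by exists a, V.
  have RH : forall i, Rf f (H i).
    by move=> i a U; rewrite base; apply: fr.
  have key : forall S, gen op H S -> Rf f S /\ gen op H' (push f S).
    move=> S; elim=> [i|S1 S2 _ [R1 G1] _ [R2 G2]].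
    + by split; [apply: RH | rewrite base; apply: gen_base].
    + case: (Hop _ _ f _ _ R1 R2) => R E; split => //; rewrite E; exact: gen_op.
  split.
  + by move=> S /key [].
  + by move=> S T /key [R1 _] /key [R2 _]; case: (Hop _ _ f _ _ R1 R2).
  + move=> S'; elim=> [i|S1 S2 _ [T1 [G1 E1]] _ [T2 [G2 E2]]].
    * exists (H i); split; [exact: gen_base | exact: base].
    * exists (op A T1 T2); split; first exact: gen_op.
      case: (key _ G1) => R1 _; case: (key _ G2) => R2 _.
      case: (Hop _ _ f _ _ R1 R2) => _ ->; by rewrite E1 E2.
  + exact: base.
- move=> A H p S _; apply: fhg_ext => a U; split.
  + case=> [b [V [hV [<- <-]]]].
    have -> : img id V = V by apply: set_ext => x; split; [case=> y [hy <-] | move=> hx; exists x].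
    exact: hV.
  + move=> h; exists a, U; split=> //; split=> //.
    by apply: set_ext => x; split; [case=> y [hy <-] | move=> hx; exists x].
- move=> A A' A'' H H' H'' f g p q r S _; apply: fhg_ext => z U; split.
  + case=> [a [V [hV [<- <-]]]]; exists (f a), (img f V); split.
    * by exists a, V.
    * split=> //; apply: set_ext => x; split.
      -- by case=> y [[w [hw <-]] <-]; exists w.
      -- by case=> w [hw <-]; exists (f w); split=> //; exists w.
  + case=> [b [V' [[a [V [hV [<- <-]]]] [<- <-]]]]; exists a, V; split=> //; split=> //.
    apply: set_ext => x; split.
    -- by case=> w [hw <-]; exists (f w); split=> //; exists w.
    -- by case=> y [[w [hw <-]] <-]; exists w.
Qed.

Lemma tight_ok A A' (f : A -> A') S T : Rf f S -> Rf f T ->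
  Rf f (tight_comp S T) /\ push f (tight_comp S T) = tight_comp (push f S) (push f T).
Proof.
move=> RS RT; split.
- move=> a U [a0 [W [[V [hV [b [hb hT]]]] [ea eW]]]].
  have hS : push f S (f a) (img f V) by exists a0, V.
  case: (RS _ _ hS) => V1 [hV1 eV1].
  have : img f V1 (f b) by rewrite eV1; exists b.
  case=> b1 [hb1 eb1].
  have hT1 : push f T (f b1) U by rewrite eb1; exists b, W.
  case: (RT _ _ hT1) => W1 [hW1 eW1].
  exists W1; split=> //; exists V1; split=> //; by exists b1.
- apply: fhg_ext => y U; split.
  + case=> [a [W [[V [hV [b [hb hT]]]] [<- <-]]]].
    exists (img f V); split; first by exists a, V.
    exists (f b); split; first by exists b.
    by exists b, W.
  + case=> [V' [[a [V [hV [<- <-]]]] [b' [[b [hb <-]] hT]]]].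
    case: (RT _ _ hT) => W [hW eW].
    exists a, W; split=> //; exists V; split=> //; by exists b.
Qed.

Lemma loose_img A A' (f : A -> A') (T : fhg A) V : Rf f T ->
  img f (fun x => exists b, V b /\ exists U, T b U /\ U x) =
  (fun x => exists b, img f V b /\ exists U, push f T b U /\ U x).
Proof.
move=> RT; apply: set_ext => x'; split.
- case=> x [[b [hb [U [hU hx]]]] <-].
  exists (f b); split; first by exists b.
  exists (img f U); split; first by exists b, U.
  by exists x.
- case=> b' [[b [hb <-]] [U' [hT hx]]].
  case: (RT _ _ hT) => U [hU eU]; subst U'.
  case: hx => x [hx <-]; exists x; split=> //; exists b; split=> //; by exists U.
Qed.

Lemma loose_ok A A' (f : A -> A') S T : Rf f S -> Rf f T ->
  Rf f (loose_comp S T) /\ push f (loose_comp S T) = loose_comp (push f S) (push f T).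
Proof.
move=> RS RT; split.
- move=> a X [a0 [W [[V [hV eW]] [ea eX]]]].
  have hS : push f S (f a) (img f V) by exists a0, V.
  case: (RS _ _ hS) => V1 [hV1 eV1].
  exists (fun x => exists b, V1 b /\ exists U, T b U /\ U x); split.
  + by exists V1.
  + by rewrite loose_img // -eX eW loose_img // eV1.
- apply: fhg_ext => y X; split.
  + case=> [a [W [[V [hV ->]] [<- <-]]]].
    exists (img f V); split; first by exists a, V.
    exact: loose_img.
  + case=> [V' [[a [V [hV [<- <-]]]] ->]].
    exists a, (fun x => exists b, V b /\ exists U, T b U /\ U x); split.
    * by exists V.
    * split=> //; exact: loose_img.
Qed.

Theorem theorem6p11 (k : nat) :
  role_functor (@tight_comp) k /\ role_functor (@loose_comp) k.
Proof.
split; apply: functor_of => A A' f S T; [exact: tight_ok | exact: loose_ok].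
Qed.
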